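(* Let $p$ be a prime and let $G$ be a $2$-tuple regular finite group of exponent $p^s$ for some $s\in\mathbb{N}$. For all $i,j\in\{1,\ldots,s\}$, the subgroup $[\Omega_i(G),\Omega_j(G)]$ is a union of order classes of $G$.
   Context: $\Omega_i(G)$ is the subgroup generated by all elements of order dividing $p^i$; $[A,B]=\langle aba^{-1}b^{-1}: a\in A,b\in B\rangle$. A subgroup $N$ of $G$ is a union of order classes if for every $n\in\mathbb{N}$ it contains either all or none of the elements of order $n$ of $G$. A finite group $G$ is $2$-tuple regular if for all pairs $(g_1,g_2),(h_1,h_2)\in G^2$ (entries may coincide) for which $g_1\mapsto h_1,g_2\mapsto h_2$ defines an isomorphism $\langle g_1,g_2\rangle\to\langle h_1,h_2\rangle$, there is a bijection $\Psi\colon G\to G$ such that for every $g\in G$ the assignment $g_1\mapsto h_1,g_2\mapsto h_2,g\mapsto\Psi(g)$ defines an isomorphism $\langle g_1,g_2,g\rangle\to\langle h_1,h_2,\Psi(g)\rangle$. *)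

(* Defs.v *)
From mathcomp Require Import all_boot all_fingroup all_solvable.
Set Implicit Arguments. Unset Strict Implicit. Unset Printing Implicit Defensive.
Import GroupScope.
Local Open Scope group_scope.

Section Defs.
Variable gT : finGroupType.

Definition Omega (p i : nat) (G : {set gT}) : {set gT} :=
  <<[set x in G | x ^+ (p ^ i) == 1]>>.

Definition union_of_order_classes (G N : {set gT}) : Prop :=
  forall n : nat,
    (forall x, x \in G -> #[x] = n -> x \in N) \/
    (forall x, x \in G -> #[x] = n -> x \notin N).

Definition defines_iso2 (g1 g2 h1 h2 : gT) : Prop :=
  exists f : {morphism <<[set g1; g2]>> >-> gT},
    [/\ isom <<[set g1; g2]>> <<[set h1; h2]>> f, f g1 = h1 & f g2 = h2].

Definition defines_iso3 (g1 g2 g3 h1 h2 h3 : gT) : Prop :=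
  exists f : {morphism <<[set g1; g2; g3]>> >-> gT},
    [/\ isom <<[set g1; g2; g3]>> <<[set h1; h2; h3]>> f,
        f g1 = h1, f g2 = h2 & f g3 = h3].

Definition tuple2_regular (G : {set gT}) : Prop :=
  forall g1 g2 h1 h2 : gT,
    g1 \in G -> g2 \in G -> h1 \in G -> h2 \in G ->
    defines_iso2 g1 g2 h1 h2 ->
    exists Psi : gT -> gT,
      [/\ {in G &, injective Psi}, Psi @: G = G &
          forall g, g \in G -> defines_iso3 g1 g2 g h1 h2 (Psi g)].

End Defs.

(* Main.v *)
Require Import Defs.
From mathcomp Require Import all_boot all_fingroup all_solvable.
Import GroupScope.
Local Open Scope group_scope.
Set Implicit Arguments. Unset Strict Implicit.

Section Aux.
Variable gT : finGroupType.
Implicit Types x y g : gT.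

Lemma transport (D1 D2 R1 R2 : {set gT}) (P : (gT -> gT) -> Prop) :
  D1 = D2 -> R1 = R2 ->
  (exists f : {morphism D1 >-> gT}, isom D1 R1 f /\ P f) ->
  exists f : {morphism D2 >-> gT}, isom D2 R2 f /\ P f.
Proof. by move=> -> ->. Qed.

Lemma iso2_same x y : #[x] = #[y] -> defines_iso2 x x y y.
Proof.
move=> oxy.
have dyx : #[y] %| #[x] by rewrite oxy.
have : exists f : {morphism <<[set x]>> >-> gT},
    isom <<[set x]>> <<[set y]>> f /\ (f x = y /\ f x = y).
  exists (eltm_morphism dyx); split; last by rewrite /= eltm_id.
  apply/isomP; split; first by rewrite injm_eltm oxy.
  exact: im_eltm.
move=> H.
have [f [If [E1 E2]]] := (@transport <<[set x]>> <<[set x; x]>> <<[set y]>> <<[set y; y]>>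
   (fun f => f x = y /\ f x = y)) (esym (congr1 _ (setUid _))) (esym (congr1 _ (setUid _))) H.
by exists f; split.
Qed.

Lemma iso3_iso2 x a y b : defines_iso3 x x a y y b -> defines_iso2 x a y b.
Proof.
case=> f [If E1 _ E3].
have e1 : <<[set x; x; a]>> = <<[set x; a]>> by rewrite setUid.
have e2 : <<[set y; y; b]>> = <<[set y; b]>> by rewrite setUid.
have [g [Ig [F1 F2]]] := (@transport _ <<[set x; a]>> _ <<[set y; b]>>
   (fun f => f x = y /\ f a = b)) e1 e2
   (ex_intro _ f (conj If (conj E1 E3))).
by exists g; split.
Qed.

Lemma iso3_facts g1 g2 g3 h1 h2 h3 : defines_iso3 g1 g2 g3 h1 h2 h3 ->
  exists f : {morphism <<[set g1; g2; g3]>> >-> gT},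
   [/\ 'injm f, f g1 = h1, f g2 = h2 & f g3 = h3].
Proof.
case=> f [If E1 E2 E3]; exists f; split=> //.
by case/isomP: If.
Qed.

Lemma in3_1 g1 g2 g3 : g1 \in <<[set g1; g2; g3]>>.
Proof. by apply: mem_gen; rewrite !inE eqxx. Qed.
Lemma in3_2 g1 g2 g3 : g2 \in <<[set g1; g2; g3]>>.
Proof. by apply: mem_gen; rewrite !inE eqxx !orbT. Qed.
Lemma in3_3 g1 g2 g3 : g3 \in <<[set g1; g2; g3]>>.
Proof. by apply: mem_gen; rewrite !inE eqxx !orbT. Qed.

Variable G : {group gT}.
Hypothesis hreg : tuple2_regular G.

Lemma psi_same x y : x \in G -> y \in G -> #[x] = #[y] ->
  exists Psi : gT -> gT, forall g, g \in G ->
    Psi g \in G /\ defines_iso3 x x g y y (Psi g).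
Proof.
move=> xG yG oxy.
have [Psi [_ PG H]] := @hreg x x y y xG xG yG yG (iso2_same oxy).
exists Psi => g gG; split; last exact: H.
by rewrite -PG; apply: imset_f.
Qed.

Definition ocu (N : {set gT}) :=
  forall x y, x \in G -> y \in G -> #[x] = #[y] -> x \in N -> y \in N.

Lemma ocu_gen (C : {set gT}) : C \subset G -> ocu C -> ocu <<C>>.
Proof.
move=> sCG oC x y xG yG oxy /gen_prodgP [n [c Cc Ex]].
elim: n c Cc x y xG yG oxy Ex => [|n IH] c Cc x y xG yG oxy.
  move=> Ex; rewrite Ex big_ord0 order1 in oxy.
  have /eqP -> : y == 1 by rewrite -order_eq1 -oxy.
  exact: group1.
rewrite big_ord_recl => Ex.
have c0G : c ord0 \in G by apply: (subsetP sCG).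
have [Psi HP] := psi_same xG yG oxy.
have [PG /iso3_facts [f [If Fx _ Fc]]] := HP _ c0G.
set z := \prod_(i < n) c (lift ord0 i).
have zx : z = (c ord0)^-1 * x by rewrite Ex mulKg.
have zD : z \in <<[set x; x; c ord0]>> by rewrite zx groupM ?groupV ?in3_1 ?in3_3.
have fz : f z = (Psi (c ord0))^-1 * y by rewrite zx morphM ?groupV ?in3_1 ?in3_3 // morphV ?in3_3 // Fc Fx.
have zG : z \in G by rewrite zx groupM ?groupV.
have z'G : (Psi (c ord0))^-1 * y \in G by rewrite groupM ?groupV.
have Hz : (Psi (c ord0))^-1 * y \in <<C>>.
  apply: (IH (fun i => c (lift ord0 i)) _ z _ zG z'G _ erefl).
    by move=> i; apply: Cc.
  by rewrite -fz (order_injm If).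
have HcC : Psi (c ord0) \in C.
  apply: (oC (c ord0)) => //; first by rewrite -Fc (order_injm If) ?in3_3.
have -> : y = Psi (c ord0) * ((Psi (c ord0))^-1 * y) by rewrite mulKVg.
by rewrite groupM // mem_gen.
Qed.

Lemma ocu_comm (A B : {set gT}) : A \subset G -> B \subset G -> ocu A -> ocu B ->
  ocu (commg_set A B).
Proof.
move=> sAG sBG oA oB x y xG yG oxy /imset2P [a b aA bB Ex].
have aG : a \in G by apply: (subsetP sAG).
have bG : b \in G by apply: (subsetP sBG).
have [Psi HP] := psi_same xG yG oxy.
have [a'G Ha] := HP _ aG.
have [f [If Fx _ Fa]] := iso3_facts Ha.
have [Psi2 [_ PG H2]] := @hreg x a y (Psi a) xG aG yG a'G (iso3_iso2 Ha).
have b'G : Psi2 b \in G by rewrite -PG; apply: imset_f.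
have [g [Ig Gx Ga Gb]] := iso3_facts (H2 _ bG).
have a'A : Psi a \in A.
  by apply: (oA a) => //; rewrite -Fa (order_injm If) ?in3_3.
have b'B : Psi2 b \in B.
  by apply: (oB b) => //; rewrite -Gb (order_injm Ig) ?in3_3.
have -> : y = [~ Psi a, Psi2 b].
  by rewrite -Gx (congr1 g Ex) -Ga -Gb morphR ?in3_2 ?in3_3.
by apply: imset2_f.
Qed.

Lemma ocu_omega p i : ocu (Omega p i G).
Proof.
apply: ocu_gen; first by apply/subsetP => z; rewrite inE => /andP[].
move=> x y xG yG oxy; rewrite !inE xG yG /= -!order_dvdn oxy //.
Qed.

Lemma omega_sub p i : Omega p i G \subset G.
Proof. by rewrite gen_subG; apply/subsetP => z; rewrite inE => /andP[]. Qed.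

Lemma ocu_union N : ocu N -> union_of_order_classes G N.
Proof.
move=> oN n.
case: (boolP [exists x in G, (#[x] == n) && (x \in N)]).
  case/exists_inP => x xG /andP[/eqP ox xN]; left => y yG oy.
  by apply: (oN x) => //; rewrite ox oy.
move/exists_inP => H; right => y yG oy; apply/negP => yN.
by apply: H; exists y => //; rewrite oy eqxx.
Qed.

End Aux.

Theorem lemma4p6 (gT : finGroupType) (G : {group gT}) (p s : nat) :
  prime p -> tuple2_regular G -> exponent G = (p ^ s)%N ->
  forall i j : nat, (0 < i <= s)%N -> (0 < j <= s)%N ->
    union_of_order_classes G [~: Omega p i G, Omega p j G].
Proof.
move=> _ hreg _ i j _ _.
apply: ocu_union; apply: ocu_gen => //.
  apply: (subset_trans (subset_gen _)).
  apply: (subset_trans (commgSS (omega_sub G p i) (omega_sub G p j))).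
  by rewrite commg_subl normG.
apply: ocu_comm => //; try exact: omega_sub; exact: ocu_omega.
Qed.
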